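(* Under the hypotheses of Proposition 1 (coin $U=\begin{bmatrix} a&b\\c&d\end{bmatrix}$ unitary with $abcd\ne0$, $\Delta=\det U=e^{i\xi}$, $\cos\phi_0=|a|$ with $\phi_0\in(0,\pi/2)$, $\lambda\in\{\pm e^{i(\phi_0+\xi/2)},\pm e^{i(-\phi_0+\xi/2)}\}$, $\gamma=(\lambda+\Delta\bar\lambda)/(2a)$), one has $|\gamma|=1$ and $|\lambda-\Delta\bar\lambda|^2/(4|b|^2)=1$. Moreover, taking $\Psi_0=\Psi$ with $\Psi^L(x)=(A+xB)\gamma^x$, $\Psi^R(x)=\{(A+xB)\frac{\lambda-\Delta\bar\lambda}{2}-\lambda B\}\gamma^{x-1}/b$ ($A,B\in\mathbb{C}$, $|A|+|B|\neq0$), the measure $\mu_n=\phi((U^{(s)})^n\Psi_0)$ satisfies, for all $n\ge0$ and $x\in\mathbb{Z}$, $$\mu_n(x)=2|A+xB|^2-2x|B|^2+\frac{|B|^2-\Re\big(A\bar B(1-\Delta\bar\lambda^2)\big)}{|b|^2}.$$ In particular this $\mu_0$ belongs to $\mathcal{M}_s(U)$.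
   Context: Two-state quantum walk on $\mathbb{Z}$: $(U^{(s)}\Psi)^L(x)=a\Psi^L(x+1)+b\Psi^R(x+1)$, $(U^{(s)}\Psi)^R(x)=c\Psi^L(x-1)+d\Psi^R(x-1)$; $\phi(\Psi)(x)=|\Psi^L(x)|^2+|\Psi^R(x)|^2$; $\mathcal{M}_s(U)=\{\mu\in[0,\infty)^{\mathbb{Z}}\setminus\{0\}:\exists\Psi_0$ with $\phi((U^{(s)})^n\Psi_0)=\mu$ for all $n\ge0\}$. $\Re(z)$ denotes the real part. *)

(* Defs.v *)
(* complex numbers as an arbitrary numClosedFieldType C
   (e.g. algC); all claims are algebraic identities. *)
From HB Require Import structures.
From mathcomp Require Import all_boot all_order all_algebra.
Set Implicit Arguments. Unset Strict Implicit. Unset Printing Implicit Defensive.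
Import Order.TTheory GRing.Theory Num.Theory.
Local Open Scope ring_scope.

Section Walk.
Variable C : numClosedFieldType.

(* two-component state on Z : x |-> (Psi^L(x), Psi^R(x)) *)
Definition state := int -> C * C.

Definition ca (U : 'M[C]_2) := U 0 0.
Definition cb (U : 'M[C]_2) := U 0 1.
Definition cc (U : 'M[C]_2) := U 1 0.
Definition cd (U : 'M[C]_2) := U 1 1.

Definition unitary2 (U : 'M[C]_2) : Prop :=
  U *m (map_mx (@Num.conj C) U)^T = 1%:M.

Definition step (U : 'M[C]_2) (Psi : state) : state :=
  fun x => (ca U * (Psi (x + 1)).1 + cb U * (Psi (x + 1)).2,
            cc U * (Psi (x - 1)).1 + cd U * (Psi (x - 1)).2).

Definition walk (U : 'M[C]_2) (n : nat) (Psi : state) : state :=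
  iter n (step U) Psi.

Definition phi (Psi : state) : int -> C :=
  fun x => `|(Psi x).1| ^+ 2 + `|(Psi x).2| ^+ 2.

Definition Ms (U : 'M[C]_2) (mu : int -> C) : Prop :=
  (forall x, 0 <= mu x) /\ (exists x, mu x != 0) /\
  exists Psi0 : state, forall (n : nat) (x : int), phi (walk U n Psi0) x = mu x.

(* e^{i phi0} with cos phi0 = |a|, phi0 in (0, pi/2) (so sin phi0 > 0) *)
Definition eiphi0 (a : C) : C := `|a| + 'i * sqrtC (1 - `|a| ^+ 2).

End Walk.

(* Main.v *)
Require Import Defs.
From HB Require Import structures.
From mathcomp Require Import all_boot all_order all_algebra.
From mathcomp Require Import ring.
Import Order.TTheory GRing.Theory Num.Theory.
Local Open Scope ring_scope.

Section S.
Variable C : numClosedFieldType.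

Lemma normz1 (g : C) (k : int) : `|g| = 1 -> `|g ^ k| = 1.
Proof.
move=> H; case: k => n /=; first by rewrite normrX H expr1n.
by rewrite normfV normrX H expr1n invr1.
Qed.

Lemma eigL (a b g h lam A B : C) (x : int) :
  g != 0 -> b != 0 -> lam = a * g + h ->
  a * ((A + (x + 1)%:~R * B) * g ^ (x + 1)) +
  b * (((A + (x + 1)%:~R * B) * h - lam * B) * g ^ (x + 1 - 1) / b)
  = lam * ((A + x%:~R * B) * g ^ x).
Proof.
move=> g0 b0 ->; rewrite addrK expfzDr // expr1z intrD.
move: (g ^ x) (x%:~R : C) => G X; field.
  by rewrite ?b0 ?g0.
Qed.

Lemma eigR (a b c d g h lam Del A B : C) (x : int) :
  g != 0 -> b != 0 -> lam = a * g + h -> d = a * g ^+ 2 ->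
  Del = (a * g) ^+ 2 - h ^+ 2 -> c = (a * d - Del) / b ->
  c * ((A + (x - 1)%:~R * B) * g ^ (x - 1)) +
  d * (((A + (x - 1)%:~R * B) * h - lam * B) * g ^ (x - 1 - 1) / b)
  = lam * (((A + x%:~R * B) * h - lam * B) * g ^ (x - 1) / b).
Proof.
move=> g0 b0 -> hd hD hc; rewrite hc hD hd.
rewrite (expfzDr (x - 1) (-1) g0) intrB.
have -> : g ^ (-1) = g^-1 by [].
move: (g ^ (x - 1)) (x%:~R : C) => G X; field.
  by rewrite ?b0 ?g0.
Qed.

Lemma ccK (z : C) : z^*^* = z. Proof. exact: conjCK. Qed.

Lemma phiform (A B h lam w beta b G G' : C) (x : int) :
  b * b^* = beta -> beta != 0 -> h * h^* = beta -> lam * lam^* = 1 ->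
  h * lam^* = w / 2 -> w + w^* = 4 * beta -> `|G| = 1 -> `|G'| = 1 ->
  `|(A + x%:~R * B) * G'| ^+ 2 + `|((A + x%:~R * B) * h - lam * B) * G / b| ^+ 2
  = 2 * `|A + x%:~R * B| ^+ 2 - 2 * x%:~R * `|B| ^+ 2
    + (`|B| ^+ 2 - 'Re (A * B^* * w)) / `|b| ^+ 2.
Proof.
move=> hb hb0 hh hl hhl hw HG HG'.
rewrite normf_div !normrM HG HG' !mulr1 expr_div_n.
set Q := A + x%:~R * B.
have E2 : lam * h^* = w^* / 2.
  have -> : lam * h^* = (h * lam^*)^* by rewrite rmorphM /= ccK mulrC.
  by rewrite hhl rmorphM /= fmorphV /= rmorph_nat.
have Ew : w^* = 4 * beta - w by rewrite -hw; ring.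
have EQ : Q^* = A^* + x%:~R * B^* by rewrite /Q rmorphD rmorphM /= rmorph_int.
have N1 : `|Q * h - lam * B| ^+ 2 = Q * (A^* + x%:~R * B^*) * beta
     - Q * B^* * (w / 2) - B * (A^* + x%:~R * B^*) * (w^* / 2) + B * B^* * (lam * lam^*).
  rewrite -EQ -hh -hhl -E2 normCK rmorphB !rmorphM /=; ring.
have NQ : `|Q| ^+ 2 = Q * (A^* + x%:~R * B^*) by rewrite -EQ normCK.
have NB : `|B| ^+ 2 = B * B^* by rewrite normCK.
have Nb : `|b| ^+ 2 = beta by rewrite normCK.
have ReA : 'Re (A * B^* * w) = (A * B^* * w + A^* * B * (4 * beta - w)) / 2.
  by rewrite ReE !rmorphM /= ccK Ew.
rewrite N1 hl mulr1 NQ NB Nb ReA Ew /Q.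
field.
by [].
Qed.

Lemma params (a sg tau r Del lam : C) :
  a != 0 -> r != 0 -> sg * sg^* = 1 -> tau^* = - tau -> r^* = r ->
  a * a^* = r ^+ 2 -> r ^+ 2 - tau ^+ 2 = 1 -> sg ^+ 2 = Del ->
  lam = sg * (r + tau) ->
  let gam := (lam + Del * lam^*) / (2 * a) in
  let h := (lam - Del * lam^*) / 2 in
  let w := 1 - Del * lam^* ^+ 2 in
  [/\ lam = a * gam + h, a * gam ^+ 2 = Del * a^*, (a * gam) ^+ 2 - h ^+ 2 = Del,
      h * h^* = - tau ^+ 2 &
   [/\ lam * lam^* = 1, w + w^* = - 4 * tau ^+ 2, gam * gam^* = 1 & gam != 0]].
Proof.
move=> a0 r0 hs ht hr haa hrel hD hlam gam h w.
have sg0 : sg != 0.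
  by apply/eqP => s0; move: hs; rewrite s0 mul0r => /eqP; rewrite eq_sym oner_eq0.
have sgc : sg^* = sg^-1 by apply: (mulfI sg0); rewrite hs divff.
have ac : a^* = r ^+ 2 / a by apply: (mulfI a0); rewrite haa; field; rewrite ?a0 ?sg0 ?r0.
have lc : lam^* = sg^-1 * (r - tau) by rewrite hlam rmorphM rmorphD /= hr ht sgc.
have Dc : Del^* = sg^-1 ^+ 2 by rewrite -hD rmorphXn /= sgc.
have eg : gam = sg * r / a by rewrite /gam lc -hD hlam; field; rewrite ?a0 ?sg0 ?r0.
have eh : h = sg * tau by rewrite /h lc -hD hlam; field; rewrite ?a0 ?sg0 ?r0.
have hc : h^* = sg^-1 * - tau by rewrite eh rmorphM /= sgc ht.
have gc : gam^* = sg^-1 * r / a^* by rewrite eg rmorphM rmorphM /= fmorphV /= sgc hr.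
split.
- by rewrite eg eh hlam; field; rewrite ?a0 ?sg0 ?r0.
- by rewrite eg ac -hD; field; rewrite ?a0 ?sg0 ?r0.
- rewrite eg eh -hD; transitivity (sg ^+ 2 * (r ^+ 2 - tau ^+ 2)); first by field; rewrite ?a0 ?sg0 ?r0.
  by rewrite hrel mulr1.
- by rewrite hc eh; field; rewrite ?a0 ?sg0 ?r0.
split.
- rewrite lc hlam; transitivity (r ^+ 2 - tau ^+ 2); first by field; rewrite ?a0 ?sg0 ?r0.
  exact: hrel.
- have wc : w^* = 1 - Del^* * lam ^+ 2.
    by rewrite /w rmorphB rmorph1 rmorphM rmorphXn /= ccK.
  rewrite wc /w Dc lc -hD hlam.
  transitivity (- 4 * tau ^+ 2 + 2 * (1 - (r ^+ 2 - tau ^+ 2))); first by field; rewrite ?a0 ?sg0 ?r0.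
  by rewrite hrel subrr mulr0 addr0.
- by rewrite gc eg ac; field; rewrite ?a0 ?sg0 ?r0.
- by rewrite eg mulf_neq0 ?invr_eq0 // mulf_neq0.
Qed.

Lemma lamcases (a b s lam Del : C) :
  a * a^* + b * b^* = 1 -> s * s^* = 1 -> s ^+ 2 = Del ->
  lam \in [:: eiphi0 a * s; - (eiphi0 a * s); (eiphi0 a)^* * s; - ((eiphi0 a)^* * s)] ->
  exists sg tau, [/\ sg * sg^* = 1, sg ^+ 2 = Del, tau^* = - tau,
                     tau ^+ 2 = - (b * b^*) & lam = sg * (`|a| + tau)].
Proof.
move=> haa hs hD.
set t := sqrtC (1 - `|a| ^+ 2).
have t0 : 0 <= 1 - `|a| ^+ 2.
  by rewrite normCK -haa addrAC subrr add0r mul_conjC_ge0.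
have ht2 : t ^+ 2 = b * b^* by rewrite sqrtCK normCK -haa addrAC subrr add0r.
have tc : t^* = t by apply: geC0_conj; rewrite sqrtC_ge0.
have ic : ('i * t)^* = - ('i * t) by rewrite rmorphM /= conjCi tc mulNr.
have ec : (eiphi0 a)^* = `|a| + - ('i * t).
  by rewrite /eiphi0 -/t rmorphD /= conj_normC rmorphM /= conjCi tc mulNr.
have ss : (- s) * (- s)^* = 1 by rewrite rmorphN /= mulrNN.
have sD : (- s) ^+ 2 = Del by rewrite sqrrN.
have i2 : ('i * t) ^+ 2 = - (b * b^*) by rewrite exprMn sqrCi ht2 mulN1r.
have i2' : (- ('i * t)) ^+ 2 = - (b * b^*) by rewrite sqrrN.
have icN : (- ('i * t))^* = - - ('i * t) by rewrite rmorphN /= ic.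
rewrite !inE => /or4P [] /eqP ->.
- by exists s, ('i * t); split => //; rewrite mulrC.
- by exists (- s), ('i * t); split => //; rewrite mulrC mulNr.
- by exists s, (- ('i * t)); split => //; rewrite ec mulrC.
- by exists (- s), (- ('i * t)); split => //; rewrite ec mulrC mulNr.
Qed.
End S.

Lemma det2 (R : comNzRingType) (U : 'M[R]_2) : \det U = U 0 0 * U 1 1 - U 0 1 * U 1 0.
Proof.
rewrite (expand_det_row _ 0) !big_ord_recl big_ord0 /cofactor !det_mx11 !mxE /=.
rewrite expr0 expr1 !mul1r mulN1r addr0 mulrN.
by congr (_ * _ - _ * _); congr (U _ _); apply/val_inj.
Qed.

Lemma un (C : numClosedFieldType) (U : 'M[C]_2) : U *m (map_mx (@Num.conj C) U)^T = 1%:M ->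
  [/\ ca U * (ca U)^* + cb U * (cb U)^* = 1, cc U * (cc U)^* + cd U * (cd U)^* = 1
    & cc U * (ca U)^* + cd U * (cb U)^* = 0].
move=> H.
have e1 : (lift ord0 ord0 : 'I_2) = 1 by apply/val_inj.
split.
- move: (congr1 (fun M : 'M[C]_2 => M 0 0) H).
  by rewrite !mxE !big_ord_recl !big_ord0 !mxE addr0 e1.
- move: (congr1 (fun M : 'M[C]_2 => M 1 1) H).
  by rewrite !mxE !big_ord_recl !big_ord0 !mxE addr0 e1.
- move: (congr1 (fun M : 'M[C]_2 => M 1 0) H).
  by rewrite !mxE !big_ord_recl !big_ord0 !mxE addr0 e1.
Qed.

Theorem corollary1 (C : numClosedFieldType) (U : 'M[C]_2)
  (s lam gam A B : C) :
  unitary2 U ->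
  ca U * cb U * cc U * cd U != 0 ->
  (* s = e^{i xi/2}, where Delta = det U = e^{i xi} *)
  s ^+ 2 = \det U ->
  lam \in [:: eiphi0 (ca U) * s; - (eiphi0 (ca U) * s);
              (eiphi0 (ca U))^* * s; - ((eiphi0 (ca U))^* * s)] ->
  gam = (lam + \det U * lam^*) / (2 * ca U) ->
  `|A| + `|B| != 0 ->
  let Delta := \det U in
  let Psi0 : state C := fun x : int =>
    ((A + x%:~R * B) * gam ^ x,
     ((A + x%:~R * B) * ((lam - Delta * lam^*) / 2) - lam * B) * gam ^ (x - 1)
       / cb U) in
  `|gam| = 1 /\
  `|lam - Delta * lam^*| ^+ 2 / (4 * `|cb U| ^+ 2) = 1 /\
  (forall (n : nat) (x : int),
     phi (walk U n Psi0) x =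
       2 * `|A + x%:~R * B| ^+ 2 - 2 * x%:~R * `|B| ^+ 2
       + (`|B| ^+ 2 - 'Re (A * B^* * (1 - Delta * lam^* ^+ 2))) / `|cb U| ^+ 2) /\
  Ms U (phi Psi0).
Proof.
move=> hU habcd hs hlam hgam hAB Delta Psi0.
have [haa hcc hca] := @un _ U hU.
have hdet : Delta = ca U * cd U - cb U * cc U by rewrite /Delta det2.
rewrite -/Delta in hs hgam.
move: habcd; rewrite !mulf_eq0 !negb_or => /andP [/andP [/andP [a0 b0] c0] d0].
set a := ca U in hAB haa hcc hca hdet hgam a0 hlam *.
set b := cb U in haa hcc hca hdet b0 *.
set c := cc U in hcc hca hdet c0 *.
set d := cd U in hcc hca hdet d0 *.
have hd : d = Delta * a^*.
  transitivity (d * (a * a^* + b * b^*)); first by rewrite haa mulr1.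
  rewrite hdet; transitivity ((a * d - b * c) * a^* + b * (c * a^* + d * b^*)).
    by ring.
  by rewrite hca mulr0 addr0.
have hc' : c = - (Delta * b^*).
  transitivity (c * (a * a^* + b * b^*)); first by rewrite haa mulr1.
  rewrite hdet; transitivity (- ((a * d - b * c) * b^*) + a * (c * a^* + d * b^*)).
    by ring.
  by rewrite hca mulr0 addr0.
have hDD : Delta * Delta^* = 1.
  move: hcc; rewrite hc' hd rmorphN !rmorphM /= !ccK => H.
  transitivity (Delta * Delta^* * (a * a^* + b * b^*)); first by rewrite haa mulr1.
  rewrite -H; ring.
have hss : s * s^* = 1.
  have : (s * s^*) ^+ 2 = 1 by rewrite exprMn -rmorphXn /= hs hDD.
  by move/eqP; rewrite sqrp_eq1 ?mul_conjC_ge0 // => /eqP.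
have [sg [tau [hsg hsgD htc ht2 hl]]] := @lamcases C _ _ _ _ _ haa hss hs hlam.
have r0 : `|a| != 0 by rewrite normr_eq0.
have haar : a * a^* = `|a| ^+ 2 by rewrite normCK.
have hrel : `|a| ^+ 2 - tau ^+ 2 = 1 by rewrite ht2 opprK -haar.
have [F1 F2 F3 F4 [F5 F6 F7 F8]] := @params C _ _ _ _ _ _ a0 r0 hsg htc (conj_normC a) haar hrel hsgD hl.
rewrite -hgam in F1 F2 F3 F7 F8.
have n1 : forall z : C, z * z^* = 1 -> `|z| = 1.
  move=> z hz; have : `|z| ^+ 2 = 1 by rewrite normCK hz.
  by move/eqP; rewrite sqrp_eq1 // => /eqP.
have g1 := n1 _ F7.
have l1 := n1 _ F5.
have bb0 : b * b^* != 0 by rewrite mulf_neq0 // conjC_eq0.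
set h := (lam - Delta * lam^*) / 2 in F1 F3 F4 *.
have hh : h * h^* = b * b^* by rewrite F4 ht2 opprK.
split; first exact: g1.
split.
  have -> : lam - Delta * lam^* = 2 * h by rewrite /h; field.
  rewrite !normCK; transitivity (4 * (h * h^*) / (4 * (b * b^*))).
    by rewrite rmorphM /= rmorph_nat; ring.
  by rewrite hh; field; rewrite b0 andbT /= conjC_eq0.
have Hw : forall (n : nat) (x : int),
    walk U n Psi0 x = (lam ^+ n * (Psi0 x).1, lam ^+ n * (Psi0 x).2).
  elim=> [|n IH] x.
    by rewrite expr0 !mul1r.
  rewrite /walk iterS -/(walk U n Psi0) /step !IH /Psi0 /= -/a -/b -/c -/d -/h.
  congr pair.
    have E1 := @eigL C a b gam h lam A B x F8 b0 F1.
    transitivity (lam ^+ n * (a * ((A + (x + 1)%:~R * B) * gam ^ (x + 1)) +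
      b * (((A + (x + 1)%:~R * B) * h - lam * B) * gam ^ (x + 1 - 1) / b))).
      by ring.
    by rewrite E1 exprSr; ring.
  have hc2 : c = (a * d - Delta) / b.
    have : - (Delta * b^*) = (a * (Delta * a^*) - Delta * (a * a^* + b * b^*)) / b.
      by field.
    by rewrite haa mulr1 -hd -hc'.
  have E2 := @eigR C a b c d gam h lam Delta A B x F8 b0 F1 (etrans hd (esym F2))
     (esym F3) hc2.
  transitivity (lam ^+ n * (c * ((A + (x - 1)%:~R * B) * gam ^ (x - 1)) +
      d * (((A + (x - 1)%:~R * B) * h - lam * B) * gam ^ (x - 1 - 1) / b))).
    by ring.
  by rewrite E2 exprSr; ring.
have Hphi : forall (n : nat) (x : int),
   phi (walk U n Psi0) x =
   2 * `|A + x%:~R * B| ^+ 2 - 2 * x%:~R * `|B| ^+ 2 +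
   (`|B| ^+ 2 - 'Re (A * B^* * (1 - Delta * lam^* ^+ 2))) / `|b| ^+ 2.
  move=> n x; rewrite /phi Hw /= !(normrM (lam ^+ n)) normrX l1 expr1n !mul1r /Psi0 /= -/b -/h.
  apply: (@phiform C A B h lam (1 - Delta * lam^* ^+ 2) (b * b^*) b) => //.
  - transitivity ((lam * lam^* - Delta * lam^* ^+ 2) / 2); first by rewrite /h; ring.
    by rewrite F5.
  - by rewrite F6 ht2; ring.
  - exact: normz1.
  - exact: normz1.
split; first exact: Hphi.
split.
  by move=> y; rewrite /phi addr_ge0 // exprn_ge0.
have nz : forall y, (Psi0 y).1 != 0 -> phi Psi0 y != 0.
  move=> y hy; rewrite /phi paddr_eq0 ?exprn_ge0 // negb_and sqrf_eq0 normr_eq0 hy.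
  done.
split.
  case: (eqVneq A 0) => [A0|A0].
    have B0 : B != 0.
      by move: hAB; rewrite A0 normr0 add0r normr_eq0.
    exists 1; apply: nz; rewrite /Psi0 /= A0 add0r.
    by rewrite !mulf_neq0 ?expfz_neq0 ?intr_eq0.
  exists 0; apply: nz; rewrite /Psi0 /=.
  by rewrite (_ : (0:int)%:~R = 0 :> C) // mul0r addr0 expr0z mulr1.
exists Psi0 => n y.
by rewrite Hphi -(Hphi 0%N).
Qed.
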